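(* For integers $n\ge2$ and $1\le l\le\lfloor n/2\rfloor$, $$p^{(H)}_n(l,n-l)=\Big(\tfrac1{\sqrt2}\Big)^{n-2l+1}(-1)^{n-l}\Big\{P^{0,n-2l}_{l-1}(0)-P^{1,n-2l}_{l-1}(0)\Big\},$$ $$q^{(H)}_n(l,n-l)=\Big(\tfrac1{\sqrt2}\Big)^{n-2l+1}(-1)^{n-l}\Big\{\Big(\frac{n-l}{l}\Big)P^{1,n-2l}_{l-1}(0)-P^{0,n-2l}_{l-1}(0)\Big\}.$$
   Context: For $\min\{l,m\}\ge1$, $n=l+m$: $p^{(H)}_n(l,m)=(1/\sqrt2)^{n-1}\sum_{\gamma=1}^{(l-1)\wedge m}(-1)^{m-\gamma}\binom{l-1}{\gamma}\binom{m-1}{\gamma-1}$ and $q^{(H)}_n(l,m)=(1/\sqrt2)^{n-1}\sum_{\gamma=1}^{l\wedge(m-1)}(-1)^{m-\gamma-1}\binom{l-1}{\gamma-1}\binom{m-1}{\gamma}$ (empty sums are $0$). $P^{\nu,\mu}_k(x)$ is the Jacobi polynomial, orthogonal on $[-1,1]$ w.r.t. $(1-x)^\nu(1+x)^\mu$, normalized by $P^{\nu,\mu}_k(x)=\frac{\Gamma(k+\nu+1)}{\Gamma(k+1)\Gamma(\nu+1)}\,{}_2F_1(-k,k+\nu+\mu+1;\nu+1;(1-x)/2)$. *)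

(* Defs.v *)
From Stdlib Require Import Reals Lra Lia Arith List.
Open Scope R_scope.

Definition rsum (a N : nat) (f : nat -> R) : R :=
  fold_right Rplus 0 (map f (seq a N)).

Fixpoint poch (x : R) (j : nat) : R :=
  match j with
  | O => 1
  | S j' => poch x j' * (x + INR j')
  end.

(* 2F1(-k, b; c; x): the series terminates since (-k)_j = 0 for j > k,
   so it is the finite sum over j = 0..k. *)
Definition hyp2F1_term (k : nat) (b c x : R) : R :=
  rsum 0 (S k) (fun j =>
    poch (- INR k) j * poch b j / (poch c j * INR (fact j)) * x ^ j).

(* Jacobi polynomial P^{nu,mu}_k(x) for natural parameters nu, mu:
   Gamma(k+nu+1)/(Gamma(k+1) Gamma(nu+1)) = (k+nu)!/(k! nu!). *)
Definition jacobiP (nu mu k : nat) (x : R) : R :=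
  INR (fact (k + nu)) / (INR (fact k) * INR (fact nu)) *
  hyp2F1_term k (INR k + INR nu + INR mu + 1) (INR nu + 1) ((1 - x) / 2).

Definition pH (l m : nat) : R :=
  (1 / sqrt 2) ^ (l + m - 1) *
  rsum 1 (Nat.min (l - 1) m) (fun g =>
    (-1) ^ (m - g) * C (l - 1) g * C (m - 1) (g - 1)).

Definition qH (l m : nat) : R :=
  (1 / sqrt 2) ^ (l + m - 1) *
  rsum 1 (Nat.min l (m - 1)) (fun g =>
    (-1) ^ (m - g - 1) * C (l - 1) (g - 1) * C (m - 1) g).

(* Main.v *)
Require Import Defs.
From Stdlib Require Import Reals Lra Lia Arith List.
Open Scope R_scope.

Fixpoint sumN (N : nat) (f : nat -> R) : R :=
  match N with O => 0 | S N' => sumN N' f + f N' end.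

Lemma sumN_ext N f g : (forall i, (i < N)%nat -> f i = g i) -> sumN N f = sumN N g.
Proof. induction N; intros H; simpl; auto. rewrite IHN, H; auto. Qed.

Lemma sumN_plus N f g : sumN N (fun i => f i + g i) = sumN N f + sumN N g.
Proof. induction N; simpl; [lra|]. rewrite IHN; lra. Qed.

Lemma sumN_scal N a f : sumN N (fun i => a * f i) = a * sumN N f.
Proof. induction N; simpl; [lra|]. rewrite IHN; lra. Qed.

Lemma sumN_shift N f : sumN (S N) f = f O + sumN N (fun i => f (S i)).
Proof. induction N; simpl in *; [lra|]. rewrite IHN; lra. Qed.

Lemma sumN_zero N f : (forall i, (i < N)%nat -> f i = 0) -> sumN N f = 0.
Proof. induction N; intros H; simpl; auto. rewrite IHN, H; auto; lra. Qed.

Lemma sumN_extend N T f : (N <= T)%nat -> (forall i, (N <= i)%nat -> f i = 0) ->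
  sumN T f = sumN N f.
Proof. intros HT H. induction HT; auto. simpl. rewrite IHHT, H; [lra|lia]. Qed.

Lemma rsum_sumN a N f : rsum a N f = sumN N (fun i => f (a + i)%nat).
Proof.
  revert a; induction N; intros a; [reflexivity|].
  rewrite sumN_shift. unfold rsum in *. simpl. rewrite IHN.
  rewrite Nat.add_0_r. f_equal. apply sumN_ext; intros; f_equal; lia.
Qed.

Fixpoint bin (n k : nat) : R :=
  match n, k with
  | O, O => 1
  | O, S _ => 0
  | S _, O => 1
  | S n', S k' => bin n' k' + bin n' (S k')
  end.

Lemma bin_over n k : (n < k)%nat -> bin n k = 0.
Proof.
  revert k; induction n; intros [|k] H; simpl; try lia; auto.
  rewrite !IHn; [lra|lia|lia].
Qed.

Lemma C_n0 n : C n 0 = 1.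
Proof. unfold C. rewrite Nat.sub_0_r. simpl. field. apply INR_fact_neq_0. Qed.
Lemma C_nn n : C n n = 1.
Proof. unfold C. rewrite Nat.sub_diag. simpl. field. apply INR_fact_neq_0. Qed.

Lemma bin_C n k : (k <= n)%nat -> bin n k = C n k.
Proof.
  revert k; induction n; intros [|k] H.
  - simpl. rewrite C_n0. auto.
  - lia.
  - simpl. rewrite C_n0; auto.
  - simpl. destruct (Nat.eq_dec k n) as [->|Hn].
    + rewrite (bin_over n (S n)) by lia. rewrite IHn by lia. rewrite !C_nn. lra.
    + rewrite !IHn by lia. apply pascal. lia.
Qed.

Lemma bin_sym n k : (k <= n)%nat -> bin n k = bin n (n - k).
Proof. intros H. rewrite !bin_C by lia. apply pascal_step1; auto. Qed.

Lemma bin_absorb n i : INR (S n) * bin n i = INR (S i) * bin (S n) (S i).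
Proof.
  destruct (le_lt_dec i n) as [H|H].
  - rewrite !bin_C by lia. unfold C. replace (S n - S i)%nat with (n - i)%nat by lia.
    rewrite !fact_simpl, !mult_INR.
    pose proof (INR_fact_neq_0 i). pose proof (INR_fact_neq_0 (n-i)).
    assert (INR (S i) <> 0) by (apply not_0_INR; lia).
    field. auto.
  - rewrite !bin_over by lia. lra.
Qed.

Definition binm (n k : nat) : R := match k with O => 0 | S k' => bin n k' end.
Lemma bin_S n k : bin (S n) k = bin n k + binm n k.
Proof. destruct k; simpl. destruct n; simpl; lra. lra. Qed.

Lemma sumN_S N f : sumN (S N) f = sumN N f + f N.
Proof. reflexivity. Qed.

Definition Lp (k b M : nat) : R :=
  sumN (S k) (fun j => (-1)^j * bin b (k - j) * bin (M + j) j * 2^(k - j)).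
Definition Rr (k b c : nat) : R :=
  sumN (S k) (fun s => (-1)^s * bin b (k - s) * bin c s).

Lemma Lp_rec k b M : Lp (S k) (S b) M = Lp (S k) b M + 2 * Lp k b M.
Proof.
  unfold Lp. rewrite (sumN_S (S k)), (sumN_S (S k) (fun j => _ * bin b _ * _ * _)).
  rewrite Nat.sub_diag.
  assert (E: sumN (S k) (fun j => (-1)^j * bin (S b) (S k - j) * bin (M + j) j * 2^(S k - j))
    = sumN (S k) (fun j => (-1)^j * bin b (S k - j) * bin (M + j) j * 2^(S k - j))
      + 2 * sumN (S k) (fun j => (-1)^j * bin b (k - j) * bin (M + j) j * 2^(k - j))).
  { rewrite <- sumN_scal, <- sumN_plus. apply sumN_ext. intros i Hi.
    replace (S k - i)%nat with (S (k - i)) by lia. rewrite bin_S. simpl binm. simpl pow. ring. }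
  rewrite E. destruct b; simpl; ring.
Qed.

Lemma Rr_rec k b c : Rr (S k) (S b) c = Rr (S k) b (S c) + 2 * Rr k b c.
Proof.
  unfold Rr.
  set (X := sumN (S (S k)) (fun s => (-1)^s * bin b (S k - s) * bin c s)).
  assert (E1: sumN (S (S k)) (fun s => (-1)^s * bin (S b) (S k - s) * bin c s)
     = X + Rr k b c).
  { unfold X, Rr.
    rewrite (sumN_ext (S (S k)) _ (fun s => (-1)^s * bin b (S k - s) * bin c s
            + (-1)^s * binm b (S k - s) * bin c s)).
    2:{ intros; rewrite bin_S; ring. }
    rewrite sumN_plus. f_equal. rewrite sumN_S. rewrite Nat.sub_diag. change (binm b 0) with 0.
    rewrite Rmult_0_r, Rmult_0_l, Rplus_0_r. apply sumN_ext. intros i Hi.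
    replace (S k - i)%nat with (S (k - i)) by lia. reflexivity. }
  assert (E2: sumN (S (S k)) (fun s => (-1)^s * bin b (S k - s) * bin (S c) s)
     = X - Rr k b c).
  { unfold X, Rr.
    rewrite (sumN_ext (S (S k)) _ (fun s => (-1)^s * bin b (S k - s) * bin c s
            + (-1)^s * bin b (S k - s) * binm c s)).
    2:{ intros; rewrite bin_S; ring. }
    rewrite sumN_plus. rewrite (sumN_shift (S k) (fun s => _ * binm c s)).
    change (binm c 0) with 0.
    assert (H: sumN (S k) (fun i => (-1)^(S i) * bin b (S k - S i) * binm c (S i)) =
               -1 * sumN (S k) (fun i => (-1)^i * bin b (k - i) * bin c i)).
    { rewrite <- sumN_scal. apply sumN_ext; intros; simpl; ring. }
    rewrite H. ring. }
  rewrite E1, E2. unfold Rr. ring.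
Qed.

Lemma Lp_Rr k : forall b c M, (M + k = b + c)%nat -> Lp k b M = Rr k b c.
Proof.
  induction k; intros b c M H.
  - unfold Lp, Rr; simpl. destruct b, M, c; simpl; ring.
  - induction b in c, M, H |- *.
    + unfold Lp, Rr. rewrite !(sumN_S (S k)). rewrite Nat.sub_diag.
      rewrite !sumN_zero.
      * replace c with (M + S k)%nat by lia. simpl. ring.
      * intros i Hi. replace (S k - i)%nat with (S (k - i)) by lia. simpl. ring.
      * intros i Hi. replace (S k - i)%nat with (S (k - i)) by lia. simpl. ring.
    + rewrite Lp_rec, Rr_rec. rewrite (IHb (S c) M) by lia.
      rewrite (IHk b c M) by lia. reflexivity.
Qed.

Lemma poch_neg k j : (j <= k)%nat ->
  poch (- INR k) j = (-1)^j * INR (fact k) / INR (fact (k - j)).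
Proof.
  induction j; intros H.
  - simpl. rewrite Nat.sub_0_r. field. apply INR_fact_neq_0.
  - simpl poch. rewrite IHj by lia.
    replace (k - j)%nat with (S (k - S j)) by lia.
    rewrite fact_simpl, mult_INR.
    replace (- INR k + INR j) with (- INR (S (k - S j))).
    2:{ rewrite S_INR, minus_INR by lia. rewrite S_INR. ring. }
    pose proof (INR_fact_neq_0 (k - S j)).
    assert (INR (S (k - S j)) <> 0) by (apply not_0_INR; lia).
    simpl pow. field. auto.
Qed.

Lemma poch_pos x j : poch (INR x + 1) j = INR (fact (x + j)) / INR (fact x).
Proof.
  induction j.
  - simpl. rewrite Nat.add_0_r. field. apply INR_fact_neq_0.
  - simpl poch. rewrite IHj. replace (x + S j)%nat with (S (x + j)) by lia.
    rewrite fact_simpl, mult_INR. rewrite S_INR, plus_INR.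
    pose proof (INR_fact_neq_0 x). field. auto.
Qed.

Lemma jacobi_Lp nu mu k :
  jacobiP nu mu k 0 = (1/2)^k * Lp k (k + nu) (k + nu + mu).
Proof.
  unfold jacobiP, hyp2F1_term, Lp. rewrite rsum_sumN.
  rewrite <- !sumN_scal. apply sumN_ext. intros j Hj. simpl (0 + j)%nat.
  replace (INR k + INR nu + INR mu + 1) with (INR (k + nu + mu) + 1) by (rewrite !plus_INR; ring).
  rewrite poch_neg by lia. rewrite !poch_pos.
  rewrite !bin_C by lia. unfold C.
  replace (k + nu - (k - j))%nat with (nu + j)%nat by lia.
  replace (k + nu + mu + j - j)%nat with (k + nu + mu)%nat by lia.
  replace ((1 - 0) / 2) with (1/2) by field.
  replace ((1/2)^k) with ((1/2)^j * (1/2)^(k-j)).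
  2:{ rewrite <- pow_add. f_equal. lia. }
  pose proof (INR_fact_neq_0 k). pose proof (INR_fact_neq_0 nu).
  pose proof (INR_fact_neq_0 j). pose proof (INR_fact_neq_0 (k-j)).
  pose proof (INR_fact_neq_0 (nu+j)). pose proof (INR_fact_neq_0 (k+nu+mu)).
  assert (2^(k-j) <> 0) by (apply pow_nonzero; lra).
  replace (1/2) with (/2) by field. rewrite !pow_inv.
  field. repeat split; auto. apply pow_nonzero; lra.
Qed.

Lemma sign_sub m j : (j <= m)%nat -> (-1)^(m - j) = (-1)^m * (-1)^j.
Proof.
  intros H. replace m with ((m - j) + j)%nat at 2 by lia. rewrite pow_add.
  rewrite Rmult_assoc, <- pow_add. replace (j + j)%nat with (2 * j)%nat by lia.
  rewrite pow_mult. replace ((-1)^2) with 1 by ring. rewrite pow1. ring.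
Qed.

Lemma sumN_minus N f g : sumN N (fun i => f i - g i) = sumN N f - sumN N g.
Proof. induction N; simpl; [lra|]. rewrite IHN; lra. Qed.

Lemma half_pow k : (1 / sqrt 2) ^ (2 * k) = (1/2)^k.
Proof.
  rewrite pow_mult. f_equal. simpl. rewrite Rmult_1_r.
  assert (H := sqrt_sqrt 2 ltac:(lra)). assert (sqrt 2 <> 0) by (intro E; rewrite E in H; lra).
  replace (1 / sqrt 2 * (1 / sqrt 2)) with (1 / (sqrt 2 * sqrt 2)) by (field; auto).
  rewrite H. reflexivity.
Qed.

Theorem mainTheorem8 (n l : nat) :
  (2 <= n)%nat -> (1 <= l)%nat -> (l <= n / 2)%nat ->
  pH l (n - l) =
    (1 / sqrt 2) ^ (n - 2 * l + 1) * (-1) ^ (n - l) *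
    (jacobiP 0 (n - 2 * l) (l - 1) 0 - jacobiP 1 (n - 2 * l) (l - 1) 0)
  /\
  qH l (n - l) =
    (1 / sqrt 2) ^ (n - 2 * l + 1) * (-1) ^ (n - l) *
    ((INR (n - l) / INR l) * jacobiP 1 (n - 2 * l) (l - 1) 0
     - jacobiP 0 (n - 2 * l) (l - 1) 0).
Proof.
  intros Hn Hl1 Hl2.
  assert (H2l : (2 * l <= n)%nat).
  { pose proof (Nat.Div0.mul_div_le n 2). lia. }
  destruct l as [|k]; [lia|]. clear Hl1.
  replace (S k - 1)%nat with k by lia.
  set (mu := (n - 2 * S k)%nat). set (m := (n - S k)%nat). set (c := (k + mu)%nat).
  assert (Hm : m = S c) by (unfold m, c, mu; lia).
  assert (Hpow : (1 / sqrt 2) ^ (S k + m - 1) = (1 / sqrt 2) ^ (n - 2 * S k + 1) * (1/2)^k).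
  { rewrite <- half_pow, <- pow_add. f_equal. unfold m. lia. }
  rewrite !jacobi_Lp.
  rewrite (Lp_Rr k (k + 0) c (k + 0 + mu)) by (unfold c; lia).
  rewrite (Lp_Rr k (k + 1) c (k + 1 + mu)) by (unfold c; lia).
  replace (k + 0)%nat with k by lia. replace (k + 1)%nat with (S k) by lia.
  unfold Rr.
  rewrite (sumN_ext (S k) (fun s => (-1)^s * bin k (k - s) * bin c s)
             (fun s => (-1)^s * bin k s * bin c s)).
  2:{ intros i Hi. rewrite (bin_sym k (k - i)) by lia. do 3 f_equal. lia. }
  rewrite (sumN_ext (S k) (fun s => (-1)^s * bin (S k) (k - s) * bin c s)
             (fun s => (-1)^s * bin (S k) (S s) * bin c s)).
  2:{ intros i Hi. rewrite (bin_sym (S k) (k - i)) by lia. do 3 f_equal. lia. }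
  split.
  - unfold pH. rewrite Hpow. rewrite rsum_sumN.
    rewrite (sumN_ext _ _ (fun i => (-1)^m * ((-1)^(S i) * bin k (S i) * bin c i))).
    2:{ intros i Hi. simpl (1 + i)%nat. rewrite sign_sub by lia.
        rewrite !bin_C by lia. replace (S k - 1)%nat with k by lia.
        replace (m - 1)%nat with c by lia. replace (S i - 1)%nat with i by lia. ring. }
    rewrite sumN_scal.
    rewrite <- (sumN_extend (Nat.min (S k - 1) m) k).
    2:{ lia. }
    2:{ intros i Hi. destruct (Nat.min_spec (S k - 1) m) as [[_ E]|[_ E]]; rewrite E in Hi.
        - rewrite (bin_over k (S i)) by lia. ring.
        - rewrite (bin_over c i) by lia. ring. }
    rewrite <- (sumN_extend k (S k) (fun i => (-1)^(S i) * bin k (S i) * bin c i)).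
    2:{ lia. }
    2:{ intros i Hi. rewrite (bin_over k (S i)) by lia. ring. }
    rewrite (sumN_ext (S k) (fun i => (-1)^(S i) * bin k (S i) * bin c i)
      (fun i => (-1)^i * bin k i * bin c i + -1 * ((-1)^i * bin (S k) (S i) * bin c i))).
    2:{ intros i Hi. rewrite (bin_S k (S i)). cbn [binm pow]. ring. }
    rewrite sumN_plus, sumN_scal. fold mu. ring.
  - unfold qH. rewrite Hpow. rewrite rsum_sumN.
    rewrite (sumN_ext _ _ (fun i => (-1)^m * ((-1)^i * bin k i * bin c (S i)))).
    2:{ intros i Hi. simpl (1 + i)%nat. replace (m - S i - 1)%nat with (m - (i + 2))%nat by lia.
        rewrite sign_sub by lia.
        rewrite !bin_C by lia. replace (S k - 1)%nat with k by lia.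
        replace (m - 1)%nat with c by lia. replace (S i - 1)%nat with i by lia.
        rewrite pow_add. ring. }
    rewrite sumN_scal.
    rewrite <- (sumN_extend (Nat.min (S k) (m - 1)) (S k)).
    2:{ lia. }
    2:{ intros i Hi. destruct (Nat.min_spec (S k) (m - 1)) as [[_ E]|[_ E]]; rewrite E in Hi.
        - rewrite (bin_over k i) by lia. ring.
        - rewrite (bin_over c (S i)) by lia. ring. }
    assert (Hl : INR (S k) <> 0) by (apply not_0_INR; lia).
    assert (KEY : INR (S k) * sumN (S k) (fun i => (-1)^i * bin k i * bin c (S i)) =
      INR m * sumN (S k) (fun i => (-1)^i * bin (S k) (S i) * bin c i)
      - INR (S k) * sumN (S k) (fun i => (-1)^i * bin k i * bin c i)).
    { rewrite <- !sumN_scal, <- sumN_minus.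
      apply sumN_ext. intros i Hi. rewrite Hm.
      pose proof (bin_absorb k i) as E1. pose proof (bin_absorb c i) as E2.
      simpl bin in E1, E2 |- *.
      transitivity ((-1)^i * (INR (S k) * bin k i) * (bin c i + bin c (S i))
                    - INR (S k) * ((-1)^i * bin k i * bin c i)); [ring|].
      rewrite E1. transitivity ((-1)^i * (INR (S i) * (bin c i + bin c (S i))) * (bin k i + bin k (S i))
         + -1 * (INR (S k) * ((-1) ^ i * bin k i * bin c i))); [ring|].
      rewrite <- E2. ring. }
    fold m.
    apply (Rmult_eq_reg_l (INR (S k))); auto.
    replace (INR (S k) * ((1 / sqrt 2) ^ (n - 2 * S k + 1) * (1 / 2) ^ k *
      ((-1) ^ m * sumN (S k) (fun i => (-1) ^ i * bin k i * bin c (S i)))))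
      with ((1 / sqrt 2) ^ (n - 2 * S k + 1) * (1 / 2) ^ k * (-1) ^ m *
      (INR (S k) * sumN (S k) (fun i => (-1) ^ i * bin k i * bin c (S i)))) by ring.
    rewrite KEY. fold mu. field. auto.
Qed.
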